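(* Let $V=[n]$, let $r:2^V\to\mathbb{R}_+$ be monotone, submodular and normalized ($r(\emptyset)=0$), and let $\mathbf{P}=\{\vec{x}\in\mathbb{R}^V:\vec{x}\ge 0,\ \vec{x}(S)\le r(S)\ \forall S\subseteq V\}$. Let $a,b,c\in\mathbb{R}^V_{\ge 0}$ be such that $a+c\in\mathbf{P}$, $b\in\mathbf{P}$, and $a\le b$ coordinate-wise. Then there exists a vector $d\in\mathbb{R}^V$ such that $0\le d\le c$, $b+d\in\mathbf{P}$, and $\|c-d\|_1\le\|b-a\|_1$.
   Context: $\vec{x}(S)=\sum_{i\in S}\vec{x}_i$. Inequalities between vectors are coordinate-wise. *)

(* Defs.v *)
(* Ground set V = [n] is modelled as 'I_n; vectors in R^V
   are functions 'I_n -> R; set functions are {set 'I_n} -> R. *)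
From mathcomp Require Import all_boot all_order all_algebra.
From mathcomp Require Import reals.
Set Implicit Arguments. Unset Strict Implicit. Unset Printing Implicit Defensive.
Import Order.TTheory GRing.Theory Num.Theory.
Local Open Scope ring_scope.

Section Defs.
Variables (R : realType) (n : nat).

Definition vsum (x : 'I_n -> R) (S : {set 'I_n}) : R := \sum_(i in S) x i.

Definition set_monotone (r : {set 'I_n} -> R) : Prop :=
  forall S T : {set 'I_n}, S \subset T -> r S <= r T.

Definition set_submodular (r : {set 'I_n} -> R) : Prop :=
  forall S T : {set 'I_n}, r (S :|: T) + r (S :&: T) <= r S + r T.

Definition set_normalized (r : {set 'I_n} -> R) : Prop := r set0 = 0.

Definition set_nonneg (r : {set 'I_n} -> R) : Prop := forall S, 0 <= r S.

Definition vle (x y : 'I_n -> R) : Prop := forall i, x i <= y i.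

Definition in_polymatroid (r : {set 'I_n} -> R) (x : 'I_n -> R) : Prop :=
  vle (fun _ => 0) x /\ forall S : {set 'I_n}, vsum x S <= r S.

Definition norm1 (x : 'I_n -> R) : R := \sum_i `|x i|.

End Defs.

(* Main.v *)
Require Import Defs.
From mathcomp Require Import all_boot all_order all_algebra.
From mathcomp Require Import reals.
From mathcomp Require Import lra.
Import Order.TTheory GRing.Theory Num.Theory.
Local Open Scope ring_scope.

Lemma vsumU {R : realType} {n : nat} (x : 'I_n -> R) (S T : {set 'I_n}) :
  vsum x (S :|: T) + vsum x (S :&: T) = vsum x S + vsum x T.
Proof.
rewrite /vsum !(big_mkcond (fun i => i \in _)) -!big_split.
apply: eq_bigr => i _; rewrite in_setU in_setI.
by case: (i \in S); case: (i \in T); rewrite /= ?addr0 ?add0r.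
Qed.

Lemma tightU {R : realType} {n : nat} (r : {set 'I_n} -> R) (x : 'I_n -> R)
  (S T : {set 'I_n}) :
  set_submodular r -> (forall U, vsum x U <= r U) ->
  vsum x S = r S -> vsum x T = r T -> vsum x (S :|: T) = r (S :|: T).
Proof.
move=> sub le hS hT.
have h1 := sub S T. have h2 := vsumU x S T.
have h3 := le (S :|: T). have h4 := le (S :&: T).
apply/eqP; rewrite eq_le h3 /=. lra.
Qed.

Lemma vsum_upd {R : realType} {n : nat} (y : 'I_n -> R) (kk : 'I_n) (t : R)
  (S : {set 'I_n}) :
  vsum (fun j => y j + (if j == kk then t else 0)) S =
  vsum y S + (if kk \in S then t else 0).
Proof.
rewrite /vsum big_split /=; congr (_ + _).
rewrite big_mkcond /=.
rewrite (eq_bigr (fun j => if j == kk then (if kk \in S then t else 0) else 0)).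
  by rewrite -big_mkcond big_pred1_eq.
move=> j _; case: eqP => [->|_]; first by [].
by case: (j \in S).
Qed.

Lemma greedy {R : realType} {n : nat} (r : {set 'I_n} -> R) (b c : 'I_n -> R)
  (k : nat) :
  vle (fun _ => 0) c -> in_polymatroid r b -> (k <= n)%N ->
  exists d : 'I_n -> R,
    [/\ vle (fun _ => 0) d, vle d c, in_polymatroid r (fun i => b i + d i) &
      forall j : 'I_n, (j < k)%N -> d j = c j \/
        exists S : {set 'I_n}, j \in S /\ vsum (fun i => b i + d i) S = r S].
Proof.
move=> c0 [b0 bP]; elim: k => [|k IH] kn.
  exists (fun _ => 0); split.
  - by move=> i; rewrite lexx.
  - exact: c0.
  - split; first by move=> i; rewrite addr0 b0.
    by move=> S; rewrite /vsum (eq_bigr b) ?bP // => i _; rewrite addr0.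
  - by [].
have [d [d0 dc [y0 yP] inv]] := IH (ltnW kn).
pose kk : 'I_n := Ordinal kn.
pose y := fun i => b i + d i.
pose F := fun S : {set 'I_n} => r S - vsum y S.
have Pk : kk \in [set: 'I_n] by rewrite inE.
case: (@arg_minP _ _ _ [set: 'I_n] (fun S => kk \in S) F Pk) => S0 kS0 S0min.
pose m := F S0.
have m0 : 0 <= m by rewrite /m /F subr_ge0 yP.
have [t [t0 tc tm ht]] : exists t, [/\ 0 <= t, t <= c kk - d kk, t <= m &
    t = c kk - d kk \/ t = m].
  have [hle|hlt] := leP (c kk - d kk) m.
    exists (c kk - d kk); split => //; last by left.
    by rewrite subr_ge0 dc.
  by exists m; split => //; [exact: ltW | right].
pose d' := fun j => d j + (if j == kk then t else 0).
have Ey : forall S, vsum (fun i => b i + d' i) S =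
    vsum y S + (if kk \in S then t else 0).
  move=> S; rewrite -vsum_upd; apply: eq_bigr => i _; rewrite /d' /y addrA //.
have feas : forall S, vsum (fun i => b i + d' i) S <= r S.
  move=> S; rewrite Ey; case: ifP => kS; last by rewrite addr0 yP.
  have := S0min S kS; rewrite -/m /F => hm. lra.
exists d'; split.
- move=> i; rewrite /d'; case: eqP => _; last by rewrite addr0 d0.
  by apply: addr_ge0.
- move=> i; rewrite /d'; case: eqP => [->|_]; last by rewrite addr0 dc.
  lra.
- split => //; move=> i; rewrite /d'.
  have := b0 i; have := d0 i; case: eqP => _ /= h1 h2; lra.
- move=> j; rewrite ltnS leq_eqVlt => /orP [/eqP jk | jk].
    have -> : j = kk by apply: val_inj.
    case: ht => ht.
      by left; rewrite /d' eqxx ht; lra.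
    right; exists S0; split => //; rewrite Ey kS0 ht /m /F; lra.
  have jne : (j == kk) = false.
    by apply/negbTE; apply/eqP => e; move: jk; rewrite e /= ltnn.
  case: (inv j jk) => [e|[S [jS tS]]].
    by left; rewrite /d' jne addr0.
  right; exists S; split => //.
  apply/eqP; rewrite eq_le feas /= Ey.
  have : vsum y S = r S by [].
  case: ifP => _ h; rewrite ?addr0 h ?lexx //; lra.
Qed.

Theorem lemma3p1 (R : realType) (n : nat) (r : {set 'I_n} -> R)
    (a b c : 'I_n -> R) :
  set_nonneg r -> set_monotone r -> set_submodular r -> set_normalized r ->
  vle (fun _ => 0) a -> vle (fun _ => 0) b -> vle (fun _ => 0) c ->
  in_polymatroid r (fun i => a i + c i) ->
  in_polymatroid r b ->
  vle a b ->
  exists d : 'I_n -> R,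
    [/\ vle (fun _ => 0) d, vle d c,
        in_polymatroid r (fun i => b i + d i) &
        norm1 (fun i => c i - d i) <= norm1 (fun i => b i - a i)].
Proof.
move=> rnn rmon rsub r0 a0 b0 c0 [_ acP] bP ab.
have [d [d0 dc [y0 yP] inv]] := @greedy _ _ r b c n c0 bP (leqnn n).
pose y := fun i => b i + d i.
pose U := \bigcup_(S | vsum y S == r S) S.
have tU : vsum y U = r U.
  rewrite /U; apply: (big_ind (fun S => vsum y S = r S)).
  - by rewrite /vsum big_set0 r0.
  - by move=> S T; apply: tightU.
  - by move=> S /eqP.
have outU : forall j, j \notin U -> d j = c j.
  move=> j jU; case: (inv j (ltn_ord j)) => // [[S [jS tS]]].
  exfalso; move/negP: jU; apply.
  by apply: (subsetP (bigcup_sup S _)) => //; apply/eqP.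
exists d; split => //.
rewrite /norm1.
rewrite (eq_bigr (fun i => c i - d i)); last first.
  by move=> i _; rewrite ger0_norm // subr_ge0.
rewrite [X in _ <= X](eq_bigr (fun i => b i - a i)); last first.
  by move=> i _; rewrite ger0_norm // subr_ge0.
rewrite (bigID (fun i => i \in U)) /=.
rewrite (eq_bigr (fun _ => 0) (P := fun i => i \notin U)); last first.
  by move=> i iU; rewrite outU // subrr.
rewrite big1_eq addr0.
rewrite [X in _ <= X](bigID (fun i => i \in U)) /=.
have h1 : 0 <= \sum_(i | i \notin U) (b i - a i).
  by apply: sumr_ge0 => i _; rewrite subr_ge0.
suff : \sum_(i | i \in U) (c i - d i) <= \sum_(i | i \in U) (b i - a i) by lra.
have e1 := acP U. move: e1 tU.
rewrite /vsum !big_split /= => e1 tU.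
rewrite ?sumrN. clear -e1 tU.
lra.
Qed.
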